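(* Let $p$ be an odd prime, let $l>2$ be an integer with $l\mid p-1$, and let $\omega$ be a primitive $l$-th root of unity in $\mathbb{F}_p$. For $(r_1,r_2,r_3)\in\{(1,0,3),(0,3,1),(0,1,3)\}$ let $\mathcal{C}_{(r_1,r_2,r_3)}$ be the cyclic code over $\mathbb{F}_p$ generated by $(x-1)^{r_1}(x+1)^{r_2}(x-\omega)^{r_3}$, of length $lp$ when $r_2=0$, and of length $lp$ if $l$ is even, $2lp$ if $l$ is odd, when $r_2\neq 0$. For $(r_1,r_2,r_3)\in\{(0,3,1),(0,1,3)\}$ assume additionally that $l$ is odd or $l\equiv 0\pmod 4$. Then $\mathcal{C}_{(r_1,r_2,r_3)}$ is an MDS symbol-pair code with minimum symbol-pair distance $d_p=6$.
   Context: For $\mathbf{x}=(x_0,\dots,x_{n-1})\in\mathbb{F}_p^n$, the symbol-pair weight is $\omega_p(\mathbf{x})=|\{i:(x_i,x_{i+1})\neq(0,0)\}|$ (indices modulo $n$), and the symbol-pair distance is $D_p(\mathbf{x},\mathbf{y})=|\{i:(x_i,x_{i+1})\neq(y_i,y_{i+1})\}|$. The minimum symbol-pair distance is the minimum of $D_p$ over distinct codewords. A code of length $n$ with minimum symbol-pair distance $d_p$ is an MDS symbol-pair code if $|\mathcal{C}|=p^{n-d_p+2}$. The cyclic code generated by $g(x)\mid x^n-1$ is the ideal $\langle g(x)\rangle$ in $\mathbb{F}_p[x]/\langle x^n-1\rangle$. *)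

(* Defs.v *)
From HB Require Import structures.
From mathcomp Require Import all_boot all_order all_algebra.
From mathcomp Require Import boolp.
Set Implicit Arguments. Unset Strict Implicit. Unset Printing Implicit Defensive.
Import GRing.Theory.
Local Open Scope ring_scope.

(* Words of length n over a finite field F are row vectors 'rV[F]_n,
   coordinates x_0,...,x_{n-1}; index i+1 is taken modulo n via ordS. *)

Definition pair_dist (F : finFieldType) (n : nat) (x y : 'rV[F]_n) : nat :=
  #|[set i : 'I_n | (x 0 i, x 0 (ordS i)) != (y 0 i, y 0 (ordS i))]|.

Definition pair_weight (F : finFieldType) (n : nat) (x : 'rV[F]_n) : nat :=
  #|[set i : 'I_n | (x 0 i, x 0 (ordS i)) != (0, 0)]|.

(* The cyclic code generated by g: the ideal <g(x)> of F[x]/<x^n - 1>,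
   a word c being identified with c_0 + c_1 x + ... + c_{n-1} x^{n-1}. *)
Definition cyclic_code (F : finFieldType) (n : nat) (g : {poly F})
  : {set 'rV[F]_n} :=
  [set c : 'rV[F]_n |
     `[< exists q : {poly F}, rVpoly c = (q * g) %% ('X^n - 1) >] ].

Definition min_pair_dist (F : finFieldType) (n : nat) (C : {set 'rV[F]_n})
  (d : nat) : Prop :=
  (exists2 x, x \in C & exists2 y, y \in C & x != y /\ pair_dist x y = d) /\
  (forall x y, x \in C -> y \in C -> x != y -> (d <= pair_dist x y)%N).

Definition MDS_pair_code (F : finFieldType) (n : nat) (C : {set 'rV[F]_n})
  (d : nat) : Prop :=
  min_pair_dist C d /\ #|C| = (#|F| ^ (n - d + 2))%N.

Definition gen_poly (F : finFieldType) (w : F) (r1 r2 r3 : nat) : {poly F} :=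
  ('X - 1) ^+ r1 * ('X + 1) ^+ r2 * ('X - w%:P) ^+ r3.

Definition code_len (p l r2 : nat) : nat :=
  if r2 == 0%N then (l * p)%N else if odd l then (2 * l * p)%N else (l * p)%N.

(* Main.v *)
Require Import Defs.
From HB Require Import structures.
From mathcomp Require Import all_boot all_order all_algebra.
From mathcomp Require Import zify ring.
From mathcomp Require Import boolp.
Import GRing.Theory.
Local Open Scope ring_scope.
Set Implicit Arguments. Unset Strict Implicit.

Lemma dvd_deriv (F : fieldType) (z : F) k (f : {poly F}) :
  ('X - z%:P) ^+ k.+1 %| f -> ('X - z%:P) ^+ k %| f^`().
Proof.
case/dvdpP => q ->; rewrite derivM deriv_exp derivXsubC mul1r /=.
apply: dvdp_add.
  by apply: dvdp_mull; apply: dvdp_exp2l.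
by rewrite -mulr_natr mulrA; apply: dvdp_mulr; apply: dvdp_mull.
Qed.

Lemma root_dvd (F : fieldType) (z : F) k (f : {poly F}) :
  ('X - z%:P) ^+ k.+1 %| f -> root f z.
Proof.
move=> H; rewrite -dvdp_XsubCl; apply: dvdp_trans H.
by rewrite -{1}(expr1 ('X - z%:P)); apply: dvdp_exp2l.
Qed.
Lemma noHC (F : fieldType) (g : {poly F}) (z a b c : F) m :
  z != 0 -> ('X - z%:P) ^+ 3 %| g -> a != 0 -> b != 0 -> c != 0 -> (2 <= m)%N ->
  ~~ (g %| a%:P + b *: 'X + c *: 'X^m).
Proof.
move=> z0 Hg a0 b0 c0 m2; apply/negP => Hf.
have H3 := dvdp_trans Hg Hf.
have R0 := root_dvd H3.
have R1 := root_dvd (dvd_deriv H3).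
have R2 := root_dvd (dvd_deriv (dvd_deriv H3)).
have D1 : (a%:P + b *: 'X + c *: 'X^m)^`() = b%:P + c *: ('X^(m.-1) *+ m).
  by rewrite !derivD derivC derivZ derivX derivZ derivXn add0r alg_polyC.
have D2 : (a%:P + b *: 'X + c *: 'X^m)^`()^`() = c *: ('X^(m.-2) *+ m.-1 *+ m).
  by rewrite D1 derivD derivC derivZ derivMn derivXn add0r.
move: R0 R1 R2; rewrite D2 D1 /root !hornerE.
rewrite hornerMn hornerMn hornerMn hornerXn hornerXn.
rewrite -(mulr_natr (z ^+ m.-1)) -(mulr_natr (z^+m.-2) m.-1) -(mulr_natr (_ * _) m).
rewrite !mulf_eq0 (negbTE c0) expf_eq0 (negbTE z0) !andbF /=.
move=> R0 R1; case/orP => [/eqP m1|/eqP m0]; last first.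
  by move: R1; rewrite m0 !mulr0 addr0 (negbTE b0).
have m1' : m%:R = 1 :> F.
  case: m m2 m1 {D1 D2 Hf H3 R0 R1} => [|m] // _ /= m1.
  by rewrite -addn1 natrD m1 add0r.
move: R1; rewrite m1' mulr1 => /eqP E1.
have : a + z * (b + c * z ^+ m.-1) = 0.
  rewrite mulrDr addrA mulrCA -exprS prednK ?(mulrC z b) //; first by apply/eqP.
  by apply: leq_trans m2.
rewrite E1 mulr0 addr0 => /eqP; by rewrite (negbTE a0).
Qed.

Lemma HB_info (F : fieldType) (g : {poly F}) (u v a b : F) m :
  v != 0 -> ('X - u%:P) %| g -> ('X - v%:P) ^+ 2 %| g -> b != 0 -> (0 < m)%N ->
  g %| a%:P + b *: 'X^m -> u ^+ m = v ^+ m /\ m%:R = 0 :> F.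
Proof.
move=> v0 Hu Hv b0 m0 Hf.
have Ru : root (a%:P + b *: 'X^m) u by rewrite -dvdp_XsubCl (dvdp_trans Hu Hf).
have H2 := dvdp_trans Hv Hf.
have Rv : root (a%:P + b *: 'X^m) v by rewrite -dvdp_XsubCl; apply: dvdp_trans H2; rewrite -{1}(expr1 ('X - v%:P)); apply: dvdp_exp2l.
have R1 : root (a%:P + b *: 'X^m)^`() v.
  rewrite -dvdp_XsubCl; apply: dvdp_trans (dvd_deriv H2); by rewrite expr1.
move: Ru Rv R1; rewrite derivD derivC derivZ derivXn add0r /root !hornerE hornerMn hornerXn.
move=> /eqP Ru /eqP Rv /eqP R1; split.
  apply: (mulfI b0); apply: (addrI a); by rewrite Ru Rv.
move: R1; rewrite -mulr_natr => /eqP; rewrite !mulf_eq0 (negbTE b0) expf_eq0 (negbTE v0) andbF /=.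
by move/eqP.
Qed.
Lemma card_extra (T : finType) (S P : {set T}) (xs : seq T) :
  S \subset P -> uniq xs -> {subset xs <= P} ->
  (forall x, x \in xs -> x \notin S) -> (#|S| + size xs <= #|P|)%N.
Proof.
elim: xs S => [|x xs IH] S /= SP; first by rewrite addn0 => *; apply: subset_leq_card.
case/andP => xnin uxs sub nS.
have := IH (x |: S); rewrite cardsU1 nS ?mem_head // addnS; apply.
- by rewrite subUset sub1set SP sub ?mem_head.
- by [].
- by move=> y yin; apply: sub; rewrite inE yin orbT.
- move=> y yin; rewrite in_setU1 negb_or nS ?inE ?yin ?orbT // andbT.
  by apply: contraNneq xnin => <-.
Qed.

Lemma transition (Q : nat -> bool) i0 d :
  ~~ Q i0 -> Q d -> (i0 < d)%N -> exists2 i, (i < d)%N & ~~ Q i && Q i.+1.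
Proof.
move=> nQ; elim: d => // d IH Qd lt.
case Qd': (Q d).
  have lt' : (i0 < d)%N.
    rewrite ltnS leq_eqVlt in lt; case/orP: lt => [/eqP E|//].
    by move: nQ; rewrite E Qd'.
  by case: (IH Qd' lt') => i id Hi; exists i => //; apply: ltnW.
by exists d => //; rewrite Qd' Qd.
Qed.
Lemma core (F : fieldType) (g f : {poly F}) n :
  size g = 5%N -> g %| 'X^n - 1 ->
  (forall a b m, a != 0 -> b != 0 -> (0 < m < n)%N -> ~~ (g %| a%:P + b *: 'X^m)) ->
  (forall a b c m, a != 0 -> b != 0 -> c != 0 -> (2 <= m < n)%N ->
     ~~ (g %| a%:P + b *: 'X + c *: 'X^m)) ->
  g %| f -> f`_0 != 0 -> (size f < n)%N ->
  (6 <= #|[set i : 'I_n | ((f`_i)%R != 0%R) || ((f`_(i.+1 %% n))%R != 0%R)]|)%N.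
Proof.
move=> sg gX HB HC gf f0 sfn.
set P := [set i : 'I_n | _].
have fn0 : f != 0 by apply: contraNneq f0 => ->; rewrite coef0.
have sf : (5 <= size f)%N by rewrite -sg dvdp_leq.
set d := (size f).-1.
have dn : d.+1 = size f.
  rewrite /d prednK //. lia.
have fd : f`_d != 0 by rewrite -lead_coefE lead_coef_eq0.
clearbody d.
have fz : forall j, (d < j)%N -> f`_j = 0.
  move=> j dj; rewrite nth_default //. by rewrite -dn.
have n1 : (n.-1 < n)%N.
  lia.
pose on := Ordinal n1.
set S := [set i : 'I_n | f`_i != 0].
have SP : S \subset P by apply/subsetP => i; rewrite !inE => ->.
have onP : on \in P.
  rewrite inE /= prednK ?modnn ?f0 ?orbT //. lia.
have onS : on \notin S.
  rewrite inE /= negbK; apply/eqP/fz. lia.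
have inS : forall j (Hj : (j < n)%N), (Ordinal Hj \in S) = (f`_j != 0) by move=> j Hj; rewrite inE.
have dltn : (d < n)%N by rewrite -ltnS dn ltnS ltnW.
have d4 : (4 <= d)%N by rewrite -ltnS dn.
have jn : forall j, f`_j != 0 -> (j < n)%N.
  move=> j fj; case: (ltnP d j) => dj; first by rewrite fz ?eqxx in fj.
  exact: leq_ltn_trans dj dltn.
case: (boolP [forall i : 'I_d, f`_i != 0]) => [/forallP HA | ].
  have le : (d.+1 <= n)%N by [].
  have : (#|[set widen_ord le i | i : 'I_d.+1]| <= #|S|)%N.
    apply: subset_leq_card; apply/subsetP => _ /imsetP [i _ ->]; rewrite inE /=.
    have := ltn_ord i; rewrite ltnS leq_eqVlt => /orP [/eqP -> //|id].
    exact: (HA (Ordinal id)).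
  rewrite card_imset; last by move=> x y /(f_equal val) /= xy; apply: val_inj.
  rewrite card_ord => Sd.
  have := card_extra (xs := [:: on]) SP isT.
  have Hsub : {subset [:: on] <= P} by move=> x; rewrite inE => /eqP ->.
  have Hns : (forall x, x \in [:: on] -> x \notin S) by move=> x; rewrite inE => /eqP ->.
  move=> /(_ Hsub Hns) /= H; apply: leq_trans H; rewrite addn1 ltnS.
  exact: leq_ltn_trans d4 Sd.
rewrite negb_forall => /existsP [i0]; rewrite negbK => /eqP fi0.
have nQ : ~~ (f`_i0 != 0) by rewrite fi0 eqxx.
have [i id /andP [fi fi1]] :=
  @transition (fun j => f`_j != 0) i0 d nQ fd (ltn_ord i0).
rewrite negbK in fi.
have Hi : (i < n)%N by apply: ltn_trans id dltn.
pose oi := Ordinal Hi.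
have H2 := card_extra (xs := [:: oi; on]) SP.
have : (#|S| + 2 <= #|P|)%N.
  apply: H2.
  - rewrite /= !inE -val_eqE /=. clear -id dltn. lia.
  - move=> x; rewrite !inE => /orP [] /eqP ->; last by move: onP; rewrite inE.
    by rewrite /= modn_small ?fi1 ?orbT //; apply: leq_ltn_trans id dltn.
  - move=> x; rewrite !inE => /orP [] /eqP ->; last by move: onS; rewrite inE.
    by rewrite negbK.
move=> HS2; case: (leqP 4 #|S|) => S3; first by apply: leq_trans HS2; rewrite addn2 !ltnS.
have n0 : (0 < n)%N by apply: leq_ltn_trans _ dltn.
pose o0 := Ordinal n0.
pose od := Ordinal dltn.
have key : forall (xs : seq 'I_n), uniq xs -> (forall x, x \in xs -> f`_x != 0) -> (size xs <= #|S|)%N.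
  move=> xs uxs Hxs; have := card_extra (S := set0) (P := S) (xs := xs) (sub0set _) uxs.
  rewrite cards0 add0n; apply.
    by move=> x /Hxs; rewrite inE.
  by move=> x _; rewrite inE.
have d0 : (d == 0%N) = false by clear -d4; case: d d4.
have cardS3 : forall xs : seq 'I_n, uniq xs -> (forall x, x \in xs -> f`_x != 0) ->
   (#|S| < size xs)%N -> False.
  by move=> xs uxs Hxs /leq_trans; move/(_ _ (key xs uxs Hxs)); rewrite ltnn.
case: (ltnP #|S| 3) => [S2|S3'].
  have supp : forall j, f`_j != 0 -> (j == 0%N) || (j == d).
    move=> j fj; apply/negPn/negP => Hj.
    apply: (cardS3 [:: o0; od; Ordinal (jn j fj)]) => //.
      rewrite /= !inE -!val_eqE /=. clear -Hj d4. lia.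
    by move=> x; rewrite !inE => /or3P [] /eqP ->.
  have fE : f = (f`_0)%:P + f`_d *: 'X^d.
    apply/polyP => j; rewrite coefD coefC coefZ coefXn.
    case: (eqVneq j 0%N) => [->|j0]; first by rewrite eq_sym d0 mulr0 addr0.
    case: (eqVneq j d) => [->|jd]; first by rewrite mulr1 add0r.
    rewrite mulr0 addr0; apply/eqP; apply: contraT => fj.
    by have := supp j fj; rewrite (negbTE j0) (negbTE jd).
  suff : (0 < d < n)%N by move/(HB _ _ _ f0 fd); rewrite -fE gf.
  by rewrite dltn andbT; clear -d4; lia.
have [oe oeS oeN] : exists2 oe, oe \in S & oe \notin [set o0; od].
  apply/subsetPn; apply/negP => sub; have := subset_leq_card sub.
  rewrite cards2 => H; have := leq_trans S3' H; rewrite ltnS.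
  have -> : (o0 != od) by rewrite -val_eqE /= eq_sym d0.
  by [].
have fe : f`_oe != 0 by move: oeS; rewrite inE.
move: oeN; rewrite !inE -!val_eqE /= => /norP [e0 ed].
set e := nat_of_ord oe in fe e0 ed.
have el : (e < d)%N.
  rewrite ltn_neqAle ed /=; case: (leqP e d) => // de.
  by rewrite fz ?eqxx in fe.
have supp : forall j, f`_j != 0 -> [|| j == 0%N, j == e | j == d].
  move=> j fj; apply/negPn/negP => Hj.
  apply: (cardS3 [:: o0; oe; od; Ordinal (jn j fj)]) => //.
    rewrite /= !inE -!val_eqE /= -/e. clear -Hj d4 el e0. lia.
  by move=> x; rewrite !inE => /or4P [] /eqP ->.
have fE : f = (f`_0)%:P + f`_e *: 'X^e + f`_d *: 'X^d.
  apply/polyP => j; rewrite !coefD coefC !coefZ !coefXn.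
  case: (eqVneq j 0%N) => [->|j0].
    by rewrite [0%N == d]eq_sym d0 [0%N == e]eq_sym (negbTE e0) !mulr0 !addr0.
  case: (eqVneq j e) => [->|je].
    by rewrite (negbTE ed) mulr1 mulr0 add0r addr0.
  case: (eqVneq j d) => [->|jd].
    by rewrite mulr1 mulr0 add0r add0r.
  rewrite !mulr0 !addr0; apply/eqP; apply: contraT => fj.
  by have := supp j fj; rewrite (negbTE j0) (negbTE je) (negbTE jd).
case: (eqVneq e 1%N) => [e1|e1].
  suff : (1 < d < n)%N by move/(HC _ _ _ _ f0 fe fd); move: fE; rewrite e1 expr1 => <-; rewrite gf.
  by rewrite dltn andbT; clear -d4; lia.
case: (eqVneq d e.+1) => [de|de].
  have en : (e < n)%N by apply: ltn_trans el dltn.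
  have Hdiv : g %| (f`_e)%:P + f`_d *: 'X + f`_0 *: 'X^(n - e)%N.
    have H := dvdp_sub (dvdp_mull ('X^(n - e)%N) gf) (dvdp_mull ((f`_e)%:P + f`_d *: 'X) gX).
    suff <- : 'X^(n - e)%N * f - ((f`_e)%:P + f`_d *: 'X) * ('X^n - 1) =
      (f`_e)%:P + f`_d *: 'X + f`_0 *: 'X^(n - e)%N by [].
    have nE : n = ((n - e) + e)%N by rewrite subnK // ltnW.
    rewrite {1}fE de {2}nE exprD exprS -!mul_polyC.
    move: ('X^(n - e)%N) ('X^e) => A B.
    ring.
  suff : (1 < (n - e) < n)%N by move/(HC _ _ _ _ fe fd f0); rewrite Hdiv.
  clear -de dltn e0; lia.
have he1 : (e.-1 < n)%N by clear -el dltn; lia.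
have hd1 : (d.-1 < n)%N by clear -el dltn; lia.
have fe1 : f`_(e.-1) = 0.
  apply/eqP; apply: contraT => fj; have := supp _ fj.
  clear -e0 e1 el de; lia.
have fd1 : f`_(d.-1) = 0.
  apply/eqP; apply: contraT => fj; have := supp _ fj.
  clear -e0 e1 el de; lia.
have := card_extra (xs := [:: on; Ordinal he1; Ordinal hd1]) SP.
have H3 : (3 <= #|S|)%N by [].
move=> H; apply: leq_trans (H _ _ _); first by rewrite /= addn3 ltnS.
- rewrite /= !inE -!val_eqE /=. clear -e0 el de e1 dltn. lia.
- move=> x; rewrite !inE => /or3P [] /eqP ->; first by move: onP; rewrite inE.
    by rewrite /= prednK ?modn_small ?fe ?orbT //; clear -e0 el dltn; lia.
  by rewrite /= prednK ?modn_small ?fd ?orbT //; clear -d4 dltn; lia.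
- move=> x; rewrite !inE => /or3P [] /eqP ->; first by move: onS; rewrite inE.
    by rewrite /= fe1 eqxx.
  by rewrite /= fd1 eqxx.
Qed.

From mathcomp Require Import boolp.

Section Vec.
Variables (F : finFieldType) (n' : nat).
Local Notation n := n'.+1.
Implicit Types c : 'rV[F]_n.

Definition Aof (c : 'rV[F]_n) (t : nat) : F := c 0 (inord (t %% n)).
Definition rotk (k : nat) (c : 'rV[F]_n) : 'rV[F]_n := \row_(i < n) Aof c (i + k).

Lemma Aof_ord c (i : 'I_n) : c 0 i = Aof c i.
Proof. by rewrite /Aof modn_small // inord_val. Qed.

Lemma Aof_mod c t : Aof c (t %% n) = Aof c t.
Proof. by rewrite /Aof modn_mod. Qed.

Lemma Aof_modS c t : Aof c (t %% n).+1 = Aof c t.+1.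
Proof. by rewrite /Aof; congr (c 0 (inord _)); rewrite -addn1 modnDml addn1. Qed.

Lemma Aof_rot k c t : Aof (rotk k c) t = Aof c (t + k).
Proof. by rewrite {1}/Aof mxE inordK ?ltn_pmod // /Aof modnDml. Qed.

Lemma Aof_ordS c (i : 'I_n) : c 0 (ordS i) = Aof c i.+1.
Proof.
rewrite /Aof; congr (c 0 _); apply: val_inj; by rewrite /= inordK // ltn_pmod.
Qed.

Lemma pw_Aof c : pair_weight c =
  #|[set i : 'I_n | (Aof c i != 0) || (Aof c i.+1 != 0)]|.
Proof.
apply: eq_card => i; rewrite !inE xpair_eqE negb_and -Aof_ord Aof_ordS //.
Qed.

Lemma pw_rot k c : pair_weight (rotk k c) = pair_weight c.
Proof.
rewrite !pw_Aof.
pose h (i : 'I_n) : 'I_n := inord ((i + k) %% n).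
have hinj : injective h.
  move=> i j /(congr1 val); rewrite /= !inordK ?ltn_pmod // => /eqP.
  rewrite eqn_modDr !modn_small // => /eqP; exact: val_inj.
rewrite -[in RHS](card_preimset _ hinj); apply: eq_card => i; rewrite !inE.
by rewrite /h inordK ?ltn_pmod // Aof_mod Aof_modS !Aof_rot addSn.
Qed.

Lemma coef_rV c j : (rVpoly c)`_j = if (j < n)%N then Aof c j else 0.
Proof.
rewrite coef_rVpoly; case: insubP => [i Hj <-|/negbTE ->] /=; last by [].
by rewrite ltn_ord Aof_ord.
Qed.

Lemma rot1_poly c : rVpoly (rotk 1 c) * 'X = rVpoly c + (c 0 0)%:P * ('X^n - 1).
Proof.
apply/polyP => j; rewrite coefMX coefD coefCM coefB coefXn coef1 !coef_rV.
have c00 : c 0 0 = Aof c 0 by rewrite Aof_ord.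
case: j => [|j] /=; first by rewrite c00 mulrBr mulr0 mulr1 add0r subrr.
rewrite Aof_rot addn1 subr0.
case: (ltngtP j.+1 n) => [lt|gt|eq].
- by rewrite mulr0 addr0.
- by rewrite mulr0 addr0.
- by rewrite mulr1 add0r c00 -Aof_mod eq modnn.
Qed.

Lemma memC (g : {poly F}) c : g %| 'X^n - 1 ->
  (c \in cyclic_code n g) = (g %| rVpoly c).
Proof.
move=> gX; rewrite inE; apply/asboolP/idP.
  by case=> q ->; rewrite -(dvdp_mod _ gX) dvdp_mull.
case/dvdpP => q E; exists q; rewrite -E modp_small //.
rewrite -polyC1 size_XnsubC //; apply: leq_ltn_trans (size_poly _ _) _; exact: ltnSn.
Qed.

Lemma rot1_mem (g : {poly F}) c : g %| 'X^n - 1 -> ~~ root g 0 -> g %| rVpoly c -> g %| rVpoly (rotk 1 c).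
Proof.
move=> gX g0 gc.
have cop : coprimep g 'X by rewrite -[X in coprimep _ X]subr0 -polyC0 coprimep_XsubC.
rewrite -(Gauss_dvdpl _ cop) rot1_poly dvdp_add // dvdp_mull //.
Qed.

Lemma rotS k c : rotk k.+1 c = rotk 1 (rotk k c).
Proof.
by apply/rowP => i; rewrite !mxE Aof_rot addnAC addn1 addnS.
Qed.

Lemma rot_mem (g : {poly F}) k c : g %| 'X^n - 1 -> ~~ root g 0 ->
  g %| rVpoly c -> g %| rVpoly (rotk k c).
Proof.
move=> gX g0 gc; elim: k => [|k IH].
  suff -> : rotk 0 c = c by [].
  by apply/rowP => i; rewrite mxE addn0 Aof_ord.
by rewrite rotS; apply: rot1_mem.
Qed.

Lemma Aof_per c t m : Aof c (t + m * n) = Aof c t.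
Proof. by rewrite -Aof_mod addnC modnMDl Aof_mod. Qed.

Lemma Aof_modD c t m : Aof c (t %% n + m) = Aof c (t + m).
Proof. by rewrite -Aof_mod modnDml Aof_mod. Qed.

Lemma burst c : c != 0 -> (exists i, Aof c i = 0) ->
  exists j, Aof c j != 0 /\ Aof c (j + n') = 0.
Proof.
move=> c0 [i0 Ai0].
case: (boolP [exists j : 'I_n, (Aof c j != 0) && (Aof c (j + n') == 0)]).
  by case/existsP => j /andP [H1 /eqP H2]; exists j.
rewrite negb_exists => /forallP Hn.
have step : forall t, Aof c t = 0 -> Aof c t.+1 = 0.
  move=> t At; apply/eqP; apply: contraT => At1.
  have := Hn (inord (t.+1 %% n)); rewrite inordK ?ltn_pmod // Aof_mod At1 /=.
  by rewrite Aof_modD addSnnS -(mul1n n) Aof_per At eqxx.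
have all0 : forall k, Aof c (i0 + k) = 0.
  by elim=> [|k IH]; rewrite ?addn0 // addnS step.
case/negP: c0; apply/eqP/rowP => i; rewrite mxE Aof_ord.
rewrite -(Aof_per _ _ i0) -(subnKC (_ : i0 <= i + i0 * n)%N) ?all0 //.
by apply: leq_trans (leq_addl _ _); rewrite leq_pmulr.
Qed.

Lemma lower (g : {poly F}) c : (5 < n)%N -> size g = 5%N -> g %| 'X^n - 1 -> ~~ root g 0 ->
  (forall a b m, a != 0 -> b != 0 -> (0 < m < n)%N -> ~~ (g %| a%:P + b *: 'X^m)) ->
  (forall a b e m, a != 0 -> b != 0 -> e != 0 -> (2 <= m < n)%N ->
     ~~ (g %| a%:P + b *: 'X + e *: 'X^m)) ->
  c \in cyclic_code n g -> c != 0 -> (6 <= pair_weight c)%N.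
Proof.
move=> n6 sg gX g0 HB HC cC c0; rewrite memC // in cC.
case: (boolP [forall i : 'I_n, Aof c i != 0]) => [/forallP Hall | ].
  apply: leq_trans n6 _; rewrite pw_Aof -{1}(card_ord n); apply: subset_leq_card.
  by apply/subsetP => i _; rewrite inE Hall.
rewrite negb_forall => /existsP [i0]; rewrite negbK => /eqP Ai0.
have [j [Aj Ajn]] := burst c0 (ex_intro _ (nat_of_ord i0) Ai0).
rewrite -(pw_rot j) pw_Aof.
have fC : g %| rVpoly (rotk j c) by apply: rot_mem.
have f0 : (rVpoly (rotk j c))`_0 != 0 by rewrite coef_rV /= Aof_rot add0n.
have fs : (size (rVpoly (rotk j c)) < n)%N.
  rewrite ltnS; apply/leq_sizeP => k; rewrite coef_rV leq_eqVlt => /orP [/eqP <-|lt].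
    by rewrite ltnSn Aof_rot addnC.
  by rewrite ltnNge lt.
have := core sg gX HB HC fC f0 fs.
congr (_ <= _)%N; apply: eq_card => i; rewrite !inE !coef_rV ltn_ord ltn_pmod //.
by rewrite Aof_mod.
Qed.

Lemma pd_pw (x y : 'rV[F]_n) : pair_dist x y = pair_weight (x - y).
Proof.
apply: eq_card => i; rewrite !inE !xpair_eqE !mxE !subr_eq0 //.
Qed.

Lemma mds (g : {poly F}) : (5 < n)%N -> size g = 5%N -> g %| 'X^n - 1 -> ~~ root g 0 ->
  (forall a b m, a != 0 -> b != 0 -> (0 < m < n)%N -> ~~ (g %| a%:P + b *: 'X^m)) ->
  (forall a b e m, a != 0 -> b != 0 -> e != 0 -> (2 <= m < n)%N ->
     ~~ (g %| a%:P + b *: 'X + e *: 'X^m)) ->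
  MDS_pair_code (cyclic_code n g) 6.
Proof.
move=> n6 sg gX g0 HB HC.
have g0' : g != 0 by rewrite -size_poly_eq0 sg.
have sgn : (size g <= n)%N by rewrite sg ltnW.
have subC : forall x y, x \in cyclic_code n g -> y \in cyclic_code n g -> x - y \in cyclic_code n g.
  by move=> x y; rewrite !memC // linearB; apply: dvdp_sub.
split; [split|].
- pose x : 'rV[F]_n := poly_rV g.
  have xg : rVpoly x = g by rewrite poly_rV_K.
  have xC : x \in cyclic_code n g by rewrite memC // xg.
  have zC : (0 : 'rV[F]_n) \in cyclic_code n g by rewrite memC // linear0 dvdp0.
  have x0 : x != 0 by apply: contraNneq g0' => E; rewrite -xg E linear0.
  exists x => //; exists 0 => //; split => //.
  apply/eqP; rewrite eqn_leq; apply/andP; split; last first.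
    by rewrite pd_pw; apply: (lower n6 sg gX g0 HB HC); rewrite ?subr0.
  rewrite pd_pw subr0 pw_Aof.
  have key : forall t, (t < n)%N -> Aof x t = g`_t.
    by move=> t tn; have := coef_rV x t; rewrite tn xg.
  pose s := [:: inord 0; inord 1; inord 2; inord 3; inord 4; @inord n' n'].
  apply: leq_trans (card_size s); apply: subset_leq_card; apply/subsetP => i.
  rewrite !inE; case: (ltnP i 5) => [i5|i5].
    move=> _; rewrite -!val_eqE /= !inordK //; try (clear -n6; lia).
    clear -i5; lia.
  case: (ltnP i n') => [iin|iin].
    rewrite (key i (ltn_ord i)) (key i.+1 iin).
    rewrite !nth_default ?sg //; last by apply: leq_trans i5 _.
    by rewrite eqxx.
  have iE : nat_of_ord i = n' by have := ltn_ord i; clear -iin; lia.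
  move=> _; rewrite -!val_eqE /= !inordK ?iE ?eqxx ?orbT //; clear -n6; lia.
- move=> x y xC yC xy; rewrite pd_pw; apply: (lower n6 sg gX g0 HB HC).
    exact: subC.
  by rewrite subr_eq0.
have nE : (n - 6 + 2 = 1 * (n - 4))%N by clear -n6; lia.
rewrite nE -card_mx.
pose h (u : 'rV[F]_(n - 4)) : 'rV[F]_n := poly_rV (rVpoly u * g).
have hs : forall u : 'rV[F]_(n - 4), (size (rVpoly u * g)%R <= n)%N.
  move=> u; apply: leq_trans (size_polyMleq _ _) _; rewrite sg addnS /=.
  have su : (size (rVpoly u) <= n - 4)%N by apply: size_poly.
  apply: leq_trans (leq_add su (leqnn 4)) _.
  clear -n6; lia.
have hinj : injective h.
  move=> u v /(congr1 rVpoly); rewrite !poly_rV_K ?hs // => /(mulIf g0').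
  by move=> E; rewrite -[u]rVpolyK E rVpolyK.
have -> : cyclic_code n g = h @: [set: 'rV[F]_(n - 4)].
  apply/setP => c; apply/idP/imsetP.
    rewrite memC // => /dvdpP [q E].
    have sq : (size q <= n - 4)%N.
      case: (eqVneq q 0) => [->|q0]; first by rewrite size_poly0.
      have : (size (rVpoly c) <= n)%N by apply: size_poly.
      rewrite E size_mul // sg addnS /=.
      by move=> H; rewrite leq_subRL 1?addnC //; apply: leq_trans n6.
    exists (poly_rV q); first by rewrite inE.
    by rewrite /h poly_rV_K // -E rVpolyK.
  by case=> u _ ->; rewrite memC // /h poly_rV_K ?hs // dvdp_mull.
by rewrite card_imset // cardsT; apply: eq_card.
Qed.

End Vec.
Lemma inst (F : finFieldType) (n m p : nat) (u v : F) :
  p \in [pchar F] -> (3 <= p)%N -> n = (m * p)%N -> (5 < n)%N ->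
  u ^+ m = 1 -> v ^+ m = 1 -> u != v -> u != 0 -> v != 0 ->
  (forall k, (0 < k < n)%N -> u ^+ k = v ^+ k -> (p %| k)%N -> False) ->
  MDS_pair_code (cyclic_code n (('X - u%:P) * ('X - v%:P) ^+ 3)) 6.
Proof.
move=> chp p3 nE n6 um vm uv u0 v0 HBk.
set g := ('X - u%:P) * ('X - v%:P) ^+ 3.
case: n nE n6 HBk => [|n'] nE n6 HBk; first by [].
have sg : size g = 5%N.
  by rewrite /g size_mul ?size_XsubC ?size_exp_XsubC // ?expf_neq0 // -size_poly_eq0 ?size_XsubC.
have gX : g %| 'X^(n'.+1) - 1.
  have h1 : ('X - u%:P) * ('X - v%:P) %| 'X^m - 1.
    rewrite Gauss_dvdp ?coprimep_XsubC ?root_XsubC 1?eq_sym //.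
    by rewrite !dvdp_XsubCl /root !hornerE um vm subrr eqxx.
  have chP : p \in [pchar {poly F}] by rewrite pchar_poly.
  have E : ('X^m - 1) ^+ p = 'X^(n'.+1) - 1 :> {poly F}.
    rewrite -(pFrobenius_autE chP) pFrobenius_autB_comm; last exact: commr1.
    by rewrite !pFrobenius_autE expr1n -exprM nE.
  rewrite -E; apply: dvdp_trans (dvdp_exp2r p h1).
  apply: dvdp_trans (dvdp_exp2l _ p3); rewrite exprMn /g.
  by apply: dvdp_mul => //; rewrite -{1}(expr1 ('X - u%:P)) dvdp_exp2l.
have g0 : ~~ root g 0.
  by rewrite /g rootM root_XsubC root_exp_XsubC negb_or !(eq_sym 0) u0 v0.
apply: mds => //.
- move=> a b k a0 b0 kn; apply/negP => gd.
  have [] := HB_info (u := u) (v := v) v0 _ _ b0 _ gd.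
  + by rewrite /g dvdp_mulr.
  + by rewrite /g dvdp_mull // dvdp_exp2l.
  + by case/andP: kn.
  move=> ukv kp; apply: (HBk k kn ukv); by rewrite (dvdn_pcharf chp) kp.
- move=> a b e k a0 b0 e0 kn; apply: (noHC (z := v)) => //.
  + by rewrite /g dvdp_mull.
  + by case/andP: kn.
Qed.
Lemma Fp_facts (p l : nat) (w : 'F_p) :
  prime p -> odd p -> (2 < l)%N -> (l %| p.-1)%N -> l.-primitive_root w ->
  [/\ (3 <= p)%N, (-1 : 'F_p) != 1, coprime l p, w != 0 & (w != 1) && (w != -1)].
Proof.
move=> pp po l2 lp wl.
have p3 : (3 <= p)%N.
  have := prime_gt1 pp; case: p pp po {lp wl w} => [|[|[|p]]] //.
have n11 : (-1 : 'F_p) != 1.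
  apply/eqP => E.
  have : (2%:R : 'F_p) = 0 by rewrite -[2%N]/(1 + 1)%N natrD -{1}E addNr.
  move/eqP; rewrite -(dvdn_pcharf (pchar_Fp pp)) => /(dvdn_leq (isT : (0 < 2)%N)).
  by move: p3; clear; lia.
have lltp : (l < p)%N.
  have : (l <= p.-1)%N by apply: dvdn_leq lp; move: p3; clear; lia.
  by move: p3 l2; clear; lia.
have cop : coprime l p.
  rewrite coprime_sym prime_coprime //; apply/negP => /dvdn_leq.
  have l0 : (0 < l)%N by move: l2; clear; lia.
  move/(_ l0).
  by move: lltp l2; clear; lia.
have wl1 : w ^+ l = 1 by apply: prim_expr_order.
split => //.
  apply/eqP => w0; move: wl1; rewrite w0 expr0n.
  case: l l2 {lp wl lltp cop} => // l' _ /eqP; by rewrite eq_sym oner_eq0.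
apply/andP; split.
  apply/eqP => w1; have := prim_order_dvd wl 1; rewrite w1 expr1 eqxx.
  by move/(dvdn_leq (isT : (0 < 1)%N)); move: l2; clear; lia.
apply/eqP => w1; have := prim_order_dvd wl 2; rewrite w1 sqrrN expr1n eqxx.
by move/(dvdn_leq (isT : (0 < 2)%N)); move: l2; clear; lia.
Qed.
Lemma nt_neg (p l k : nat) (w : 'F_p) :
  prime p -> odd p -> (2 < l)%N -> (l %| p.-1)%N -> l.-primitive_root w ->
  (odd l || (4 %| l))%N ->
  (0 < k < (if odd l then 2 * l * p else l * p))%N ->
  w ^+ k = (-1) ^+ k -> (p %| k)%N -> False.
Proof.
move=> pp po l2 lp wl l4 kn wk pk.
have [p3 n11 cop _ _] := Fp_facts pp po l2 lp wl.
have wl1 : w ^+ l = 1 by apply: prim_expr_order.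
have l0 : (0 < l)%N by move: l2; clear; lia.
case: (boolP (odd k)) => ko.
  have wk1 : w ^+ k = -1 by rewrite wk -signr_odd ko expr1.
  case: (boolP (odd l)) => lo.
    have E : (w ^+ k) ^+ l = 1 by rewrite -exprM mulnC exprM wl1 expr1n.
    by rewrite wk1 -signr_odd lo expr1 in E; rewrite E eqxx in n11.
  rewrite (negbTE lo) /= in l4.
  have : (l %| k * 2)%N by rewrite (prim_order_dvd wl) exprM wk1 sqrrN expr1n.
  move=> H; have : (4 %| k * 2)%N by apply: dvdn_trans l4 H.
  rewrite -[4%N]/(2 * 2)%N dvdn_pmul2r // => /dvdn_odd; rewrite ko /=.
  by move/(_ isT).
have wk1 : w ^+ k = 1 by rewrite wk -signr_odd (negbTE ko) expr0.
have lk : (l %| k)%N by rewrite (prim_order_dvd wl) wk1.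
have k0 : (0 < k)%N by case/andP: kn.
case: (boolP (odd l)) => lo; rewrite ?lo ?(negbTE lo) /= in kn.
  have : (2 * l * p %| k)%N.
    rewrite Gauss_dvd; last by rewrite coprimeMl coprime2n po cop.
    by rewrite Gauss_dvd ?coprime2n // dvdn2 ko lk pk.
  by move/(dvdn_leq k0); move: kn; clear; lia.
have : (l * p %| k)%N by rewrite Gauss_dvd // lk pk.
by move/(dvdn_leq k0); move: kn; clear; lia.
Qed.

Unset Implicit Arguments. Set Strict Implicit.
Theorem proposition3p3 (p l : nat) (w : 'F_p) (r1 r2 r3 : nat) :
  prime p -> odd p ->
  (2 < l)%N -> (l %| p.-1)%N ->
  l.-primitive_root w ->
  (r1, r2, r3) \in [:: (1, 0, 3); (0, 3, 1); (0, 1, 3)]%N ->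
  (r2 != 0%N -> odd l || (4 %| l)%N) ->
  MDS_pair_code (cyclic_code (code_len p l r2) (gen_poly w r1 r2 r3)) 6.
Proof.
move=> pp po l2 lp wl Hr Hl4.
have [p3 n11 cop w0 /andP [w1 wn1]] := Fp_facts pp po l2 lp wl.
have wl1 : w ^+ l = 1 by apply: prim_expr_order.
have chp := pchar_Fp pp.
have n6 : (5 < l * p)%N by move: l2 p3; clear; nia.
move: Hr Hl4; rewrite !inE => /or3P [] /eqP [-> -> ->] Hl4.
- have -> : gen_poly w 1 0 3 = ('X - 1%:P) * ('X - w%:P) ^+ 3.
    by rewrite /gen_poly expr1 expr0 mulr1 polyC1.
  rewrite /code_len /=.
  apply: (inst (m := l) chp p3 erefl n6) => //.
  all: try solve [by rewrite expr1n | by rewrite eq_sym | by rewrite oner_eq0].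
  move=> k kn; rewrite expr1n => /esym wk pk.
  have lk : (l %| k)%N by rewrite (prim_order_dvd wl) wk.
  have k0 : (0 < k)%N by case/andP: kn.
  have : (l * p %| k)%N by rewrite Gauss_dvd // lk pk.
  by move/(dvdn_leq k0); move: kn; clear; lia.
- have -> : gen_poly w 0 3 1 = ('X - w%:P) * ('X - (-1)%:P) ^+ 3.
    by rewrite /gen_poly polyCN polyC1 opprK expr0 mul1r expr1 mulrC.
  have l4 := Hl4 isT.
  rewrite /code_len /=.
  have Hn : forall k, (0 < k < (if odd l then 2 * l * p else l * p))%N ->
      w ^+ k = (-1) ^+ k -> (p %| k)%N -> False.
    by move=> k; apply: nt_neg.
  case: (boolP (odd l)) => lo; rewrite ?lo ?(negbTE lo) /= in Hn *.
    apply: (inst (m := (2 * l)%N) chp p3 erefl) => //.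
    all: try solve [by move: n6; clear; nia | by rewrite mulnC exprM wl1 expr1n
       | by rewrite exprM sqrrN !expr1n | by rewrite eq_sym | by rewrite oppr_eq0 oner_eq0].
  apply: (inst (m := l) chp p3 erefl) => //.
  all: try solve [by rewrite -signr_odd (negbTE lo) | by rewrite eq_sym | by rewrite oppr_eq0 oner_eq0].
- have -> : gen_poly w 0 1 3 = ('X - (-1)%:P) * ('X - w%:P) ^+ 3.
    by rewrite /gen_poly polyCN polyC1 opprK expr0 mul1r expr1.
  have l4 := Hl4 isT.
  rewrite /code_len /=.
  have Hn : forall k, (0 < k < (if odd l then 2 * l * p else l * p))%N ->
      (-1) ^+ k = w ^+ k -> (p %| k)%N -> False.
    by move=> k kn E; apply: (nt_neg pp po l2 lp wl l4 kn (esym E)).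
  case: (boolP (odd l)) => lo; rewrite ?lo ?(negbTE lo) /= in Hn *.
    apply: (inst (m := (2 * l)%N) chp p3 erefl) => //.
    all: try solve [by move: n6; clear; nia | by rewrite mulnC exprM wl1 expr1n
       | by rewrite exprM sqrrN !expr1n | by rewrite eq_sym | by rewrite oppr_eq0 oner_eq0].
  apply: (inst (m := l) chp p3 erefl) => //.
  all: try solve [by rewrite -signr_odd (negbTE lo) | by rewrite eq_sym | by rewrite oppr_eq0 oner_eq0].
Qed.
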